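(* We may fix a basis for $\mathcal{M}_k^j(\rho)$ such that $G$ is of standard form, i.e. $G=\Omega_j\,\mathrm{diag}\{\omega_1,\dots,\omega_k\}$ (equivalently, up to a permutation, $G$ has the $k$ distinct eigenvalues $\Omega_j\omega_r$, $r=1,\dots,k$, each of multiplicity one).
   Context: Non-singular monad matrices are $(A,B,C,D)$ with $A\in GL(k,\mathbb{C})$, $B\in Mat_{k\times k}(\mathbb{C})$, $C\in Mat_{k\times 2}(\mathbb{C})$, $D\in Mat_{2\times k}(\mathbb{C})$, satisfying $[A,B]+CD=0$ and the full-rank conditions, up to $(A,B,C,D)\sim(hAh^{-1},hBh^{-1},hC,Dh^{-1})$; $C_p$, $D_p$ denote the $p$-th column of $C$ and row of $D$. Fix $j\in\mathbb{Z}_{2k}$ even and $\omega\in(-\pi,\pi)$. $\mathcal{M}_k^j(\rho)$ is the set of such matrices for which there is $g\in GL(k,\mathbb{C})$ with $e^{\imath\frac{j\pi}{k}}A=gAg^{-1}$, $e^{\imath\frac{\pi}{k}}B=g(B-C_1D_1A^{-1})g^{-1}$, $e^{\imath\frac{\pi}{2k}}e^{\imath\frac{j\pi}{4k}}C_1=e^{\imath\omega}gC_2$, $e^{\imath\frac{\pi}{2k}}e^{\imath\frac{3j\pi}{4k}}C_2=e^{-\imath\omega}gAC_1$, $e^{\imath\frac{\pi}{2k}}e^{\imath\frac{3j\pi}{4k}}D_1=e^{-\imath\omega}D_2g^{-1}$, $e^{\imath\frac{\pi}{2k}}e^{\imath\frac{j\pi}{4k}}D_2=e^{\imath\omega}D_1A^{-1}g^{-1}$.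 $G=e^{-\imath\frac{j\pi}{2k}}g^2A$, which satisfies $e^{\imath\frac{2j\pi}{k}}A=GAG^{-1}$, $e^{\imath\frac{2\pi}{k}}B=GBG^{-1}$, $e^{\imath\frac{\pi}{k}}C=GC\,\mathrm{adj}(\sigma_{2j\pi/k})$, $e^{\imath\frac{\pi}{k}}D=\sigma_{2j\pi/k}DG^{-1}$ with $\sigma_\varphi=\mathrm{diag}(e^{-\imath\frac{3\varphi}{4}},e^{-\imath\frac{\varphi}{4}})$, $\mathrm{adj}(\sigma)=\det(\sigma)\sigma^{-1}$. Notation: $\Omega_j=e^{\imath\frac{(2-j)\pi}{2k}}$, $\omega_r=e^{\imath\frac{2\pi r}{k}}$. *)

(* Defs.v *)
From HB Require Import structures.
From mathcomp Require Import all_boot all_order all_algebra.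
From mathcomp Require Import complex.
From mathcomp Require Import reals trigo.
Set Implicit Arguments. Unset Strict Implicit. Unset Printing Implicit Defensive.
Import Order.TTheory GRing.Theory Num.Theory.
Local Open Scope ring_scope.
Local Open Scope complex_scope.

Definition expi (R : realType) (t : R) : R[i] := (cos t) +i* (sin t).

(* Non-singular monad matrices: A invertible, [A,B]+CD = 0, and for all
   (x,y) in C^* x C the map (A-x ; B-y ; D) : C^k -> C^{2k+2} is injective
   and the map (-(B-y), A-x, C) : C^{2k+2} -> C^k is surjective. *)
Definition nonsingular_monad (R : realType) (k : nat)
  (A B : 'M[R[i]]_k) (C : 'M[R[i]]_(k, 2)) (D : 'M[R[i]]_(2, k)) : Prop :=
  [/\ A \in unitmx,
      A *m B - B *m A + C *m D = 0 &
      forall x y : R[i], x != 0 ->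
        \rank (col_mx (col_mx (A - x%:M) (B - y%:M)) D) = k /\
        \rank (row_mx (row_mx (- (B - y%:M)) (A - x%:M)) C) = k ].

(* Main.v *)
Require Import Defs.
From HB Require Import structures.
From mathcomp Require Import all_boot all_order all_algebra.
From mathcomp Require Import complex.
From mathcomp Require Import reals trigo.
From mathcomp Require Import ring lra zify spectral.
Import Order.TTheory GRing.Theory Num.Theory.


Section Comb.
Variables (k : nat) (T : nat -> bool).
Hypothesis k0 : (0 < k)%N.
Hypothesis Tper : forall p, T (p + k) = T p.
Variable p0 : nat.
Hypothesis Tp0 : ~~ T p0.

Lemma TmulD n p : T (n * k + p) = T p.
Proof.
elim: n => [|n IH]; first by rewrite mul0n add0n.
by rewrite mulSnr -addnA [k + p]addnC addnA Tper IH.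
Qed.

Lemma Tmod p : T p = T (p %% k).
Proof. by rewrite {1}(divn_eq p k) TmulD. Qed.

Lemma fex p : exists l, ~~ T (p + l).
Proof.
exists ((k - p %% k) + p0 %% k).
have h1 := divn_eq p k; have h2 := ltn_pmod p k0.
have -> : p + (k - p %% k + p0 %% k) = (p %/ k).+1 * k + p0 %% k.
  rewrite mulSnr; move: h1 h2; set q := p %/ k * k; set r := p %% k; lia.
by rewrite TmulD -Tmod.
Qed.

Definition fmin p := ex_minn (fex p).

Lemma fP p : ~~ T (p + fmin p).
Proof. by rewrite /fmin; case: ex_minnP. Qed.

Lemma fminP p l : (l < fmin p)%N -> T (p + l).
Proof.
rewrite /fmin; case: ex_minnP => n _ mn ln; apply/negPn/negP => /mn.
by rewrite leqNgt ln.
Qed.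

Lemma fE p l : ~~ T (p + l) -> (forall l', (l' < l)%N -> T (p + l')) -> fmin p = l.
Proof.
move=> nl ml; rewrite /fmin; case: ex_minnP => n Pn mn.
apply/eqP; rewrite eqn_leq mn //= leqNgt; apply/negP => /ml.
by rewrite (negPf Pn).
Qed.

Lemma f_ext p q : (forall l, T (p + l) = T (q + l)) -> fmin p = fmin q.
Proof.
move=> e; apply: fE; first by rewrite e fP.
by move=> l' /fminP; rewrite e.
Qed.

Lemma fS p : T p -> fmin p.+1 = (fmin p).-1 /\ (0 < fmin p)%N.
Proof.
move=> Tp.
have f0 : (0 < fmin p)%N.
  rewrite lt0n; apply/negP => /eqP e; move: (fP p); rewrite e addn0 Tp //.
split=> //; apply: fE.
  by rewrite -addn1 -addnA add1n prednK // fP.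
move=> l' hl; rewrite -addn1 -addnA add1n; apply: fminP; lia.
Qed.

End Comb.

Local Open Scope ring_scope.

Lemma common_eig_sub {C : numClosedFieldType} n (P Q W : 'M[C]_n) :
  W != 0 -> (W *m P <= W)%MS -> (W *m Q <= W)%MS ->
  W *m (P *m Q) = W *m (Q *m P) ->
  exists x y (v : 'rV_n), [/\ v != 0, (v <= W)%MS, v *m P = x *: v & v *m Q = y *: v].
Proof.
move=> W0 sP sQ comm.
have r_gt0 : (0 < \rank W)%N by rewrite lt0n mxrank_eq0.
have sbP : (row_base W *m P <= row_base W)%MS by rewrite stablemx_row_base.
have sbQ : (row_base W *m Q <= row_base W)%MS by rewrite stablemx_row_base.
have bcomm : row_base W *m (P *m Q) = row_base W *m (Q *m P).
  have /submxP [X ->] : (row_base W <= W)%MS by rewrite eq_row_base.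
  by rewrite -!mulmxA comm.
have := @common_eigenvector2 C _ (restrictmx W P) (restrictmx W Q) r_gt0.
case.
  rewrite -!conjmxM ?inE //.
  by rewrite /conjmx bcomm.
move=> v0 v00 /andP [s0P s0Q].
set v := v0 *m row_base W.
have vP : (v *m P <= v)%MS by rewrite -stablemx_restrict.
have vQ : (v *m Q <= v)%MS by rewrite -stablemx_restrict.
case/eigenvectorP: vP => x /eigenspaceP vx.
case/eigenvectorP: vQ => y /eigenspaceP vy.
exists x, y, v; split=> //.
  by rewrite mulmx_free_eq0 ?row_base_free.
by rewrite (submx_trans (submxMl _ _)) // eq_row_base.
Qed.

Lemma rank_lt_ker {F : fieldType} m n (M : 'M[F]_(m, n)) (v : 'rV_m) :
  v != 0 -> v *m M = 0 -> (\rank M < m)%N.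
Proof.
move=> v0 vM.
have : (v <= kermx M)%MS by apply/sub_kermxP.
move=> /mxrankS; rewrite mxrank_ker.
have : (0 < \rank v)%N by rewrite lt0n mxrank_eq0.
move: (rank_leq_row M); lia.
Qed.


Lemma mulC0 {F : fieldType} k n (E : 'M[F]_(n, k)) (C : 'M[F]_(k, 2)) :
  E *m col 0 C = 0 -> E *m col 1 C = 0 -> E *m C = 0.
Proof.
move=> h0 h1; apply/matrixP => a l.
have e : (E *m col l C) a 0 = (E *m C) a l.
  by rewrite !mxE; apply: eq_bigr => i _; rewrite mxE.
rewrite -e [RHS]mxE; move: e => _.
have [->|->] : l = 0 \/ l = 1.
  by case: l => [[|[|l]]] // Hi; [left|right]; apply: val_inj.
  by rewrite h0 mxE.
by rewrite h1 mxE.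
Qed.

Lemma arith1 k m : (m < k)%N -> (k - m + (k - m) + m + m = k + k)%N.
Proof. lia. Qed.

Lemma arith2 k (S : nat) : ~~ (S == k) -> (S <= k)%N -> (0 < k - S)%N.
Proof. lia. Qed.

Lemma arith3 k a s : (1 < a)%N -> (k.-1 <= s)%N -> (a + s <= k)%N -> False.
Proof. lia. Qed.

Section Core.
Variable F : numClosedFieldType.
Variable k : nat.
Variables (A B g : 'M[F]_k) (C : 'M[F]_(k, 2)) (D : 'M[F]_(2, k)).
Variables (z b u : F).
Hypothesis z0 : z != 0.
Hypothesis b0 : b != 0.
Hypothesis u0 : u != 0.
Hypothesis Au : A \in unitmx.
Hypothesis gu : g \in unitmx.
Hypothesis hmon : A *m B - B *m A + C *m D = 0.
Local Notation c1 := (col 0 C).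
Local Notation c2 := (col 1 C).
Local Notation d1 := (row 0 D).
Local Notation d2 := (row 1 D).
Local Notation gi := (invmx g).
Local Notation Ai := (invmx A).
Hypothesis hA : b ^+ 4 *: A = g *m A *m gi.
Hypothesis hB : z ^+ 4 *: B = g *m (B - c1 *m d1 *m Ai) *m gi.
Hypothesis hC1 : (z ^+ 2 * b) *: c1 = u *: (g *m c2).
Hypothesis hC2 : (z ^+ 2 * b ^+ 3) *: c2 = u^-1 *: (g *m A *m c1).
Hypothesis hD1 : (z ^+ 2 * b ^+ 3) *: d1 = u^-1 *: (d2 *m gi).
Hypothesis hD2 : (z ^+ 2 * b) *: d2 = u *: (d1 *m Ai *m gi).

Let G := (b ^+ 2)^-1 *: (g *m g *m A).

Lemma CD_split : C *m D = c1 *m d1 + c2 *m d2.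
Proof.
apply/matrixP => i l; rewrite !mxE big_ord_recl big_ord_recl big_ord0 addr0.
have e : lift ord0 ord0 = 1 :> 'I_2 by apply: val_inj.
by rewrite !big_ord1 !mxE e.
Qed.

Lemma gA : g *m A = b ^+ 4 *: (A *m g).
Proof. by rewrite scalemxAl hA -mulmxA mulVmx // mulmx1. Qed.

Lemma gc2 : g *m c2 = (u^-1 * (z ^+ 2 * b)) *: c1.
Proof. by rewrite -scalerA hC1 scalerA mulVf // scale1r. Qed.

Lemma d2gi : d2 *m gi = (u * (z ^+ 2 * b ^+ 3)) *: d1.
Proof. by rewrite -scalerA hD1 scalerA mulfV // scale1r. Qed.

Lemma d1Aigi : d1 *m Ai *m gi = (u^-1 * (z ^+ 2 * b)) *: d2.
Proof. by rewrite -scalerA hD2 scalerA mulVf // scale1r. Qed.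

Lemma gAc1 : g *m A *m c1 = (u * (z ^+ 2 * b ^+ 3)) *: c2.
Proof. by rewrite -scalerA hC2 scalerA mulfV // scale1r. Qed.

Lemma gc1 : g *m c1 = (u * (z ^+ 2 * b ^+ 3) / b ^+ 4) *: (Ai *m c2).
Proof.
have -> : g *m c1 = Ai *m (A *m (g *m c1)) by rewrite mulKmx.
rewrite mulmxA -[A *m g](@scalerK _ _ (b ^+ 4)) ?expf_neq0 //.
rewrite -gA -scalemxAl gAc1 -scalemxAr -scalemxAr scalerA.
by rewrite mulrC.
Qed.

Lemma gAigi : g *m Ai *m gi = (b ^+ 4)^-1 *: Ai.
Proof.
have b4 : b ^+ 4 != 0 by rewrite expf_neq0.
have e : A *m (b ^+ 4 *: (g *m Ai *m gi)) = 1%:M.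
  have Ag : A *m g = (b ^+ 4)^-1 *: (g *m A) by rewrite gA scalerA mulVf // scale1r.
  rewrite -scalemxAr !mulmxA Ag -!scalemxAl scalerA mulfV // scale1r.
  by rewrite -(mulmxA g A) mulmxV // mulmx1 mulmxV.
have -> : g *m Ai *m gi = (b ^+ 4)^-1 *: (Ai *m (A *m (b ^+ 4 *: (g *m Ai *m gi)))).
  by rewrite mulKmx // scalerA mulVf // scale1r.
by rewrite e mulmx1.
Qed.


Lemma gBgi : g *m B *m gi = z ^+ 4 *: B + z ^+ 4 *: (Ai *m c2 *m d2).
Proof.
have e1 : g *m (c1 *m d1 *m Ai) *m gi = z ^+ 4 *: (Ai *m c2 *m d2).
  have -> : g *m (c1 *m d1 *m Ai) *m gi = (g *m c1) *m (d1 *m Ai *m gi) by rewrite !mulmxA.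
  rewrite gc1 d1Aigi -scalemxAl -scalemxAr scalerA; congr (_ *: _).
  by field; rewrite ?z0 ?b0 ?u0.
by rewrite hB mulmxBr mulmxBl e1 subrK.
Qed.

Lemma g2Bgi2 : g *m g *m B *m gi *m gi = z ^+ 8 *: (B + Ai *m (C *m D)).
Proof.
have -> : g *m g *m B *m gi *m gi = g *m (g *m B *m gi) *m gi by rewrite !mulmxA.
rewrite gBgi mulmxDr mulmxDl -!scalemxAr -!scalemxAl gBgi.
have -> : g *m (Ai *m c2 *m d2) *m gi = (g *m Ai *m gi) *m (g *m c2) *m (d2 *m gi).
  by rewrite !mulmxA -(mulmxA _ gi g) mulVmx // mulmx1.
rewrite gAigi gc2 d2gi -!scalemxAl -!scalemxAr !scalerA.
rewrite CD_split mulmxDr !mulmxA !scalerDr !scalerA.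
rewrite -scalemxAl scalerA -exprD.
have -> : z ^+ 4 / b ^+ 4 * (u * (z ^+ 2 * b ^+ 3)) * (u^-1 * (z ^+ 2 * b)) = z ^+ 8.
  by field; rewrite ?z0 ?b0 ?u0.
by rewrite [z ^+ 8 *: (_ *m c1 *m _) + _]addrC addrA.
Qed.

Lemma Ag : A *m g = (b ^+ 4)^-1 *: (g *m A).
Proof. by rewrite gA scalerA mulVf ?expf_neq0 // scale1r. Qed.

Lemma Agg : A *m g *m g = (b ^+ 8)^-1 *: (g *m g *m A).
Proof.
rewrite Ag -scalemxAl -mulmxA Ag -scalemxAr scalerA mulmxA -invfM -exprD.
by [].
Qed.

Lemma RA : A *m G = (b ^+ 8)^-1 *: (G *m A).
Proof.
rewrite /G -scalemxAr -scalemxAl scalerA mulrC -scalerA; congr (_ *: _).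
by rewrite !mulmxA Agg scalemxAl.
Qed.

Lemma RGg : g *m G = b ^+ 4 *: (G *m g).
Proof.
rewrite /G -scalemxAr -scalemxAl scalerA mulrC -scalerA; congr (_ *: _).
rewrite -!mulmxA Ag !scalemxAr scalerA mulfV ?expf_neq0 // scale1r.
by rewrite !mulmxA.
Qed.

Lemma GgiE : G *m gi = b ^+ 4 *: (gi *m G).
Proof.
have -> : G *m gi = gi *m (g *m G) *m gi by rewrite mulmxA mulVmx // mul1mx.
rewrite RGg -scalemxAr -scalemxAl; congr (_ *: _).
by rewrite !mulmxA -(mulmxA _ g gi) mulmxV // mulmx1.
Qed.

Lemma RGgi : gi *m G = (b ^+ 4)^-1 *: (G *m gi).
Proof. by rewrite GgiE scalerA mulVf ?expf_neq0 // scale1r. Qed.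

Lemma CDe : C *m D = B *m A - A *m B.
Proof.
have := hmon; move/eqP; rewrite addrC addr_eq0 => /eqP ->.
by rewrite opprB.
Qed.

Lemma ggAB : g *m g *m A *m B = z ^+ 8 *: (B *m (g *m g *m A)).
Proof.
have e1 : B + Ai *m (C *m D) = Ai *m (B *m A).
  by rewrite CDe mulmxBr mulKmx // mulmxA addrC subrK.
have e2 : g *m g *m B = z ^+ 8 *: (Ai *m (B *m A) *m g *m g).
  rewrite -e1 !scalemxAl -g2Bgi2.
  by rewrite -!mulmxA (mulKmx gu) mulVmx // mulmx1.
have e3 : A *m g *m g *m B = z ^+ 8 *: (B *m A *m g *m g).
  have -> : A *m g *m g *m B = A *m (g *m g *m B) by rewrite !mulmxA.
  by rewrite e2 -scalemxAr !mulmxA mulmxV // mul1mx.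
have e4 : A *m g *m g *m B = z ^+ 8 *: (B *m (A *m g *m g)) by rewrite e3 !mulmxA.
move: e4; rewrite Agg -scalemxAl -scalemxAr scalerA.
move/(congr1 (fun M => b ^+ 8 *: M)); rewrite !scalerA mulfV ?expf_neq0 // scale1r => ->.
by congr (_ *: _); field; rewrite ?z0 ?b0 ?u0.
Qed.

Lemma RB : B *m G = (z ^+ 8)^-1 *: (G *m B).
Proof.
rewrite /G -scalemxAr -scalemxAl ggAB !scalerA.
by congr (_ *: _); field; rewrite ?z0 ?b0 ?u0.
Qed.

Lemma Dd1 : d1 *m G = (z ^+ 4 * b ^+ 6)^-1 *: d1.
Proof.
have e : d1 *m Ai *m gi *m gi = (z ^+ 4 * b ^+ 4) *: d1.
  rewrite d1Aigi -scalemxAl d2gi scalerA; congr (_ *: _).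
  by field; rewrite ?z0 ?b0 ?u0.
have e2 : d1 *m (g *m g *m A) = (z ^+ 4 * b ^+ 4)^-1 *: d1.
  have h : (d1 *m Ai *m gi *m gi) *m (g *m g *m A) = d1.
    by rewrite -!mulmxA (mulKmx gu) (mulKmx gu) mulVmx // mulmx1.
  move: h; rewrite e -scalemxAl => h.
  by rewrite -[in RHS]h scalerA mulVf ?mulf_neq0 ?expf_neq0 // scale1r.
rewrite /G -scalemxAr e2 scalerA; congr (_ *: _).
by field; rewrite ?z0 ?b0 ?u0.
Qed.

Lemma Dd2 : d2 *m G = (z ^+ 4 * b ^+ 2)^-1 *: d2.
Proof.
have d2e : d2 = (u * (z ^+ 2 * b ^+ 3)) *: (d1 *m g).
  by rewrite scalemxAl -d2gi mulmxKV.
rewrite [in LHS]d2e -scalemxAl -mulmxA RGg -scalemxAr mulmxA Dd1 -scalemxAl.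
rewrite !scalerA [in RHS]d2e scalerA; congr (_ *: _).
by field; rewrite ?z0 ?b0 ?u0.
Qed.

Lemma Cc1 : G *m c1 = (z ^+ 4 * b ^+ 2) *: c1.
Proof.
have -> : G *m c1 = (b ^+ 2)^-1 *: (g *m (g *m A *m c1)) by rewrite /G -scalemxAl !mulmxA.
rewrite gAc1 -scalemxAr gc2 !scalerA; congr (_ *: _).
by field; rewrite ?z0 ?b0 ?u0.
Qed.

Lemma Cc2 : G *m c2 = (z ^+ 4 * b ^+ 6) *: c2.
Proof.
have c2e : c2 = (u^-1 * (z ^+ 2 * b)) *: (gi *m c1).
  by rewrite scalemxAr -gc2 (mulKmx gu).
rewrite [in LHS]c2e -scalemxAr mulmxA GgiE -scalemxAl -mulmxA Cc1 -scalemxAr.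
rewrite !scalerA [in RHS]c2e scalerA; congr (_ *: _).
by field; rewrite ?z0 ?b0 ?u0.
Qed.

Variable m : nat.
Hypothesis k0 : (0 < k)%N.
Hypothesis mk : (m < k)%N.
Hypothesis hb4 : b ^+ 4 = z ^+ (8 * m).
Hypothesis hzk : z ^+ (8 * k) = 1.
Hypothesis hsurj : forall x y : F, x != 0 ->
  \rank (row_mx (row_mx (- (B - y%:M)) (A - x%:M)) C) = k.
Hypothesis hinjr : forall x y : F, x != 0 ->
  \rank (col_mx (col_mx (A - x%:M) (B - y%:M)) D) = k.

Let nu := (z ^+ 8)^-1.
Let Om := z ^+ 4 / b ^+ 2.
Let mu (p : nat) := Om * nu ^+ p.

Lemma nuk : nu ^+ k = 1.
Proof. by rewrite /nu exprVn -exprM hzk invr1. Qed.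

Lemma muD p l : mu (p + l)%N = mu p * nu ^+ l.
Proof. by rewrite /mu exprD mulrA. Qed.

Lemma mu_per p : mu (p + k)%N = mu p.
Proof. by rewrite muD nuk mulr1. Qed.

Lemma mu_mod p : mu p = mu (p %% k).
Proof.
rewrite {1}(divn_eq p k) addnC muD mulnC exprM nuk expr1n mulr1 //.
Qed.

Lemma num : nu ^+ m = (b ^+ 4)^-1.
Proof. by rewrite /nu exprVn -exprM hb4. Qed.

Lemma nukm : nu ^+ (k - m) = b ^+ 4.
Proof.
have h : nu ^+ (k - m) * nu ^+ m = 1.
  by rewrite -exprD subnK; [exact: nuk | exact: ltnW].
have b4 : b ^+ 4 != 0 by rewrite expf_neq0.
rewrite num in h.
by rewrite -[LHS]mulr1 -(mulVf b4) mulrA h mul1r.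
Qed.

Lemma mukm : mu (k - m)%N = z ^+ 4 * b ^+ 2.
Proof.
rewrite /mu nukm /Om -mulrA; congr (_ * _).
by rewrite -[4%N]/(2 + 2)%N exprD mulKf ?expf_neq0.
Qed.

Lemma mukm2 : mu (k - m + (k - m))%N = z ^+ 4 * b ^+ 6.
Proof.
rewrite muD mukm nukm -mulrA -exprD //.
Qed.

Lemma eig_shift (M : 'M[F]_k) s l : M *m G = s *: (G *m M) ->
  (eigenspace G l *m M <= eigenspace G (s * l))%MS.
Proof.
move=> hM; apply/eigenspaceP.
have hE : eigenspace G l *m G = l *: eigenspace G l by apply/eigenspaceP.
by rewrite -mulmxA hM -scalemxAr mulmxA hE -scalemxAl scalerA.
Qed.

Lemma eigval_shift (M : 'M[F]_k) s l : M \in unitmx -> M *m G = s *: (G *m M) ->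
  eigenvalue G l -> eigenvalue G (s * l).
Proof.
move=> Mu hM /eigenvalueP [v vG v0]; apply/eigenvalueP; exists (v *m M).
  by rewrite -mulmxA hM -scalemxAr mulmxA vG -scalemxAl scalerA.
apply: contra v0 => /eqP h; by rewrite -(mulmxK Mu v) h mul0mx.
Qed.
Arguments eig_shift {M s l}.
Arguments eigval_shift {M s l}.

Let T (p : nat) := eigenvalue G (mu p).

Lemma Tper p : T (p + k)%N = T p.
Proof. by rewrite /T mu_per. Qed.

Lemma Tm p : T (p + m)%N = T p.
Proof.
apply/idP/idP => h.
  have := eigval_shift gu RGg h.
  by rewrite muD num mulrCA mulfV ?expf_neq0 // mulr1.
have giu : gi \in unitmx by rewrite unitmx_inv.
have := eigval_shift giu RGgi h.
by rewrite /T muD num mulrC.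
Qed.

Lemma Tf p q l : mu p = mu q -> T (p + l)%N = T (q + l)%N.
Proof. by move=> e; rewrite /T !muD e. Qed.

Lemma all_T p0 : T p0.
Proof.
case: (boolP (T p0)) => // Tp0.
pose f := fmin k T k0 Tper p0 Tp0.
have fext p q : mu p = mu q -> f p = f q.
  by move=> e; apply: f_ext => l; apply: Tf.
have fm p : f (p + m)%N = f p.
  by apply: f_ext => l; rewrite addnAC Tm.
have fk p : f (p + k)%N = f p by apply: fext; rewrite mu_per.
pose U p := (f p <= f 1)%N.
pose S := (\sum_(i < k | U i) eigenspace G (mu i))%MS.
have inS p : U p -> (eigenspace G (mu p) <= S)%MS.
  move=> Up; apply: (sumsmx_sup (Ordinal (ltn_pmod p k0))) => /=.
    by rewrite /U -(fext p) // -mu_mod.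
  by rewrite -mu_mod.
have DS : (D <= S)%MS.
  apply/row_subP => i.
  have [->|->] : i = 0 \/ i = 1.
    by case: i => [[|[|i]]] // Hi; [left|right]; apply: val_inj.
    apply: (submx_trans _ (inS (1 + m)%N _)); last by rewrite /U /= (fm 1%N).
    apply/eigenspaceP; rewrite Dd1; congr (_ *: _).
    rewrite muD num /mu /Om /nu expr1; field; by rewrite ?z0 ?b0 ?u0.
  apply: (submx_trans _ (inS 1%N (leqnn _))).
  apply/eigenspaceP; rewrite Dd2; congr (_ *: _).
  rewrite /mu /Om /nu expr1; field; by rewrite ?z0 ?b0 ?u0.
have E0 p : ~~ T p -> eigenspace G (mu p) = 0.
  by rewrite /T /eigenvalue negbK => /eqP.
have SA : (S *m A <= S)%MS.
  rewrite sumsmxMr; apply/sumsmx_subP => i Ui.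
  apply: submx_trans (eig_shift RA) _.
  have -> : (b ^+ 8)^-1 * mu i = mu (i + m + m)%N.
    rewrite !muD num -mulrA -invfM -exprD mulrC //.
  by apply: inS; rewrite /U /= !fm.
have SB : (S *m B <= S)%MS.
  rewrite sumsmxMr; apply/sumsmx_subP => i Ui.
  case: (boolP (T i)) => Ti; last by rewrite E0 // mul0mx sub0mx.
  apply: submx_trans (eig_shift RB) _.
  have -> : (z ^+ 8)^-1 * mu i = mu i.+1.
    by rewrite -[i.+1]addn1 muD expr1 mulrC.
  apply: inS; rewrite /U /=.
  have [e _] := fS k T k0 Tper p0 Tp0 i Ti; rewrite /f e.
  exact: leq_trans (leq_pred _) Ui.
have Sfull : row_full S.
  case: (boolP (row_full S)) => // nf; exfalso.
  pose W := kermx S^T.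
  have W0 : W != 0.
    rewrite -mxrank_eq0 mxrank_ker mxrank_tr -lt0n; apply: arith2 => //.
    exact: rank_leq_col.
  have WS : W *m S^T = 0 := mulmx_ker _.
  have stab X : (S *m X <= S)%MS -> (W *m X^T <= W)%MS.
    case/submxP => Y e; rewrite sub_kermx -mulmxA -trmx_mul e trmx_mul mulmxA WS.
    by rewrite mul0mx.
  have WDt : W *m D^T = 0.
    by case/submxP: DS => Y ->; rewrite trmx_mul mulmxA WS mul0mx.
  have comm : W *m (A^T *m B^T) = W *m (B^T *m A^T).
    rewrite -!trmx_mul.
    have -> : B *m A = A *m B + C *m D by rewrite CDe addrC subrK.
    by rewrite linearD /= mulmxDr [(C *m D)^T]trmx_mul (mulmxA W) WDt mul0mx addr0.
  have [x [y [v [v0 vW vA vB]]]] := @common_eig_sub _ _ _ _ _ W0 (stab _ SA) (stab _ SB) comm.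
  have x0 : x != 0.
    apply: contra v0 => /eqP x0; move: vA; rewrite x0 scale0r => vA.
    have Atu : A^T \in unitmx by rewrite unitmx_tr.
    by rewrite -(mulmxK Atu v) vA mul0mx.
  have := hinjr x y x0.
  have vD : v *m D^T = 0 by case/submxP: vW => Z ->; rewrite -mulmxA WDt mulmx0.
  have : v *m (col_mx (col_mx (A - x%:M) (B - y%:M)) D)^T = 0.
    rewrite !tr_col_mx !mul_mx_row vD !linearB /= !tr_scalar_mx vA vB.
    by rewrite !mul_mx_scalar !subrr !row_mx0.
  move/(@rank_lt_ker _ _ _ _ _ v0); rewrite mxrank_tr => h e; move: h; rewrite e ltnn //.
have Ec (c : 'cV[F]_k) lam i : G *m c = lam *: c -> mu i != lam ->
    eigenspace G (mu i) *m c = 0.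
  move=> Gc ne; have hE : eigenspace G (mu i) *m G = mu i *: eigenspace G (mu i).
    by apply/eigenspaceP.
  have : (mu i - lam) *: (eigenspace G (mu i) *m c) = 0.
    by rewrite scalerBl scalemxAl -hE -mulmxA Gc -scalemxAr subrr.
  by move/eqP; rewrite scaler_eq0 subr_eq0 (negPf ne) => /eqP.
have nU q : T q -> T q = T 0 -> f q = f 0 -> ~~ U q.
  move=> Tq eT ef; have T0 : T 0 by rewrite -eT.
  have [e1 p1] := fS k T k0 Tper p0 Tp0 0 T0.
  by rewrite /U /= ef -ltnNge /f e1 ltn_predL.
have fm2 q : f (q + m + m)%N = f q by rewrite !fm.
have Tm2 q : T (q + m + m)%N = T q by rewrite !Tm.
have ekm : (k - m + m = 0 + k)%N by rewrite add0n; apply: subnK; apply: ltnW.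
have ekm2 : (k - m + (k - m) + m + m = 0 + k + k)%N by rewrite add0n; apply: arith1.
have SC : S *m C = 0.
  apply/eqP; rewrite -submx0 sumsmxMr_gen; apply/sumsmx_subP => i Ui.
  rewrite genmxE submx0; apply/eqP.
  case: (boolP (T i)) => Ti; last by rewrite E0 // mul0mx.
  apply: mulC0.
    apply: Ec; first exact: Cc1.
    apply/eqP => e.
    have e' : mu i = mu (k - m)%N by rewrite mukm.
    have eT : T i = T (k - m)%N by rewrite /T e'.
    have ef : f i = f 0 by rewrite (fext _ _ e') -(fm (k - m)%N) ekm fk.
    have eT0 : T i = T 0 by rewrite eT -(Tm (k - m)%N) ekm Tper.
    by move: (nU i Ti eT0 ef); rewrite Ui.
  apply: Ec; first exact: Cc2.
  apply/eqP => e.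
  have e' : mu i = mu (k - m + (k - m))%N by rewrite mukm2.
  have eT : T i = T (k - m + (k - m))%N by rewrite /T e'.
  have ef : f i = f 0 by rewrite (fext _ _ e') -(fm2 (k - m + (k - m))%N) ekm2 !fk.
  have eT0 : T i = T 0 by rewrite eT -(Tm2 (k - m + (k - m))%N) ekm2 !Tper.
  by move: (nU i Ti eT0 ef); rewrite Ui.
have C0 : C = 0.
  move: Sfull; rewrite -sub1mx => /submxP [Y e].
  by rewrite -[C]mul1mx e -mulmxA SC mulmx0.
have AB : 1%:M *m (A *m B) = 1%:M *m (B *m A).
  have := CDe; rewrite C0 mul0mx => /eqP; rewrite eq_sym subr_eq0 => /eqP ->.
  by [].
have one0 : (1%:M : 'M[F]_k) != 0 by rewrite -mxrank_eq0 mxrank1 -lt0n.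
have [x [y [v [v0 _ vA vB]]]] :=
  @common_eig_sub _ _ A B 1%:M one0 (submx1 _) (submx1 _) AB.
have x0 : x != 0.
  apply: contra v0 => /eqP x0; move: vA; rewrite x0 scale0r => vA.
  by rewrite -(mulmxK Au v) vA mul0mx.
have := hsurj x y x0.
have : v *m row_mx (row_mx (- (B - y%:M)) (A - x%:M)) C = 0.
  rewrite !mul_mx_row C0 mulmx0 mulmxN !mulmxBr vA vB !mul_mx_scalar !subrr.
  by rewrite oppr0 !row_mx0.
by move/(@rank_lt_ker _ _ _ _ _ v0) => h e; move: h; rewrite e ltnn.
Qed.


Hypothesis hzinj : forall r s : nat, (r < k)%N -> (s < k)%N ->
  z ^+ (8 * r.+1) = z ^+ (8 * s.+1) -> r = s.

Lemma core_main : exists h : 'M[F]_k, h \in unitmx /\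
  h *m G *m invmx h = (z ^+ 4 / b ^+ 2) *: diag_mx (\row_(r < k) z ^+ (8 * r.+1)).
Proof.
pose lam (r : 'I_k) := z ^+ 4 / b ^+ 2 * z ^+ (8 * r.+1).
have lamE (r : 'I_k) : lam r = mu (k - r.+1)%N.
  rewrite /lam /mu /Om; congr (_ * _).
  have h1 : nu ^+ (k - r.+1) * nu ^+ r.+1 = 1 by rewrite -exprD subnK ?ltn_ord // nuk.
  have h2 : nu ^+ r.+1 * z ^+ (8 * r.+1) = 1.
    by rewrite /nu exprVn exprM mulVf // !expf_neq0.
  by rewrite -[RHS]mulr1 -h2 mulrA h1 mul1r.
pose E r := eigenspace G (lam r).
have ET r : E r != 0 by have := all_T (k - r.+1)%N; rewrite /T -lamE.
pose h := \matrix_(r < k) nz_row (E r).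
have hG : h *m G = diag_mx (\row_r lam r) *m h.
  apply/row_matrixP => r; rewrite row_mul rowK.
  have /eigenspaceP -> : (nz_row (E r) <= E r)%MS := nz_row_sub _.
  by rewrite mul_diag_mx; apply/rowP => c; rewrite !mxE.
have dx : mxdirect (\sum_(r < k) E r).
  apply: mxdirect_sum_eigenspace => r s _ _ e; apply: val_inj; apply: hzinj; try exact: ltn_ord.
  have Om0 : z ^+ 4 / b ^+ 2 != 0 by rewrite mulf_neq0 ?invr_eq0 ?expf_neq0.
  by apply: (mulfI Om0); exact: e.
have rk : \rank (\sum_(r < k) E r) = (\sum_(r < k) \rank (E r))%N := mxdirectP dx.
have ge r : (0 < \rank (E r))%N by rewrite lt0n mxrank_eq0.
have le : (\sum_(r < k) \rank (E r) <= k)%N by rewrite -rk rank_leq_col.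
have rk1 r : \rank (E r) = 1%N.
  apply/eqP; rewrite eqn_leq ge andbT leqNgt; apply/negP => gt.
  move: le; rewrite (bigD1 r) //=.
  have : (\sum_(i < k | i != r) 1 <= \sum_(i < k | i != r) \rank (E i))%N.
    by apply: leq_sum => i _.
  rewrite sum1_card cardC1 card_ord; move: gt; apply: arith3.
have Eh r : (E r <= h)%MS.
  have sub : (nz_row (E r) <= E r)%MS := nz_row_sub _.
  have rr : \rank (nz_row (E r)) = 1%N by rewrite rank_rV nz_row_eq0 ET.
  have := (mxrank_leqif_sup sub).2; rewrite rr rk1 eqxx => /esym Er.
  by apply: submx_trans Er _; rewrite -(rowK (fun r => nz_row (E r)) r) row_sub.
have hfull : row_full h.
  rewrite /row_full eqn_leq rank_leq_col /=.
  have : (\rank (\sum_(r < k) E r) <= \rank h)%N.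
    by apply: mxrankS; apply/sumsmx_subP => r _; apply: Eh.
  have hsum : (\sum_(r < k) \rank (E r) = k)%N.
    rewrite (eq_bigr (fun _ => 1%N)); last by move=> r _; rewrite rk1.
    by rewrite sum1_card card_ord.
  by rewrite rk hsum.
have hu : h \in unitmx by rewrite -row_full_unit.
exists h; split => //.
rewrite hG mulmxK //; apply/matrixP => a c; rewrite !mxE.
by case: (a == c); rewrite ?mulr1n ?mulr0n ?mulr0.
Qed.

End Core.

Local Open Scope complex_scope.

Section Expi.
Variable R : realType.

Lemma expiD (a b : R) : expi (a + b) = expi a * expi b.
Proof. rewrite /expi cosD sinD. simpc. congr (_ +i* _); ring. Qed.

Lemma expi0 : expi (0 : R) = 1.
Proof. by rewrite /expi cos0 sin0. Qed.

Lemma expi_neq0 (a : R) : expi a != 0.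
Proof.
apply/negP => /eqP e; have := expiD a (- a); rewrite addrN expi0 e mul0r.
by move/eqP; rewrite oner_eq0.
Qed.

Lemma expiN (a : R) : expi (- a) = (expi a)^-1.
Proof.
apply: (mulfI (expi_neq0 a)); rewrite -expiD addrN expi0 mulfV //.
exact: expi_neq0.
Qed.

Lemma expiMn (n : nat) (t : R) : expi (n%:R * t) = expi t ^+ n.
Proof.
elim: n => [|n IH]; first by rewrite mul0r expi0 expr0.
by rewrite -addn1 natrD mulrDl mul1r expiD IH exprD expr1.
Qed.

Lemma expi2pi : expi (pi *+ 2 : R) = 1.
Proof. by rewrite /expi cos2pi sin2pi. Qed.

Lemma expi_neq1 (t : R) : 0 < t < pi *+ 2 -> expi t != 1.
Proof.
case/andP => t0 t2; apply/negP => /eqP e.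
have s0 : sin t = 0 by have := congr1 (@complex.Im R) e.
have c1 : cos t = 1 by have := congr1 (@complex.Re R) e.
have pi0 : 0 < pi :> R := pi_gt0 R.
case: (ltrgtP t pi) => tp.
- have : 0 < sin t by apply: sin_gt0_pi; rewrite t0 tp.
  by rewrite s0 ltxx.
- have : 0 < sin (t - pi) by apply: sin_gt0_pi; rewrite subr_gt0 tp /=; lra.
  by rewrite sinB cospi sinpi s0; lra.
- by move: c1; rewrite tp cospi; lra.
Qed.
End Expi.

Lemma arithk j k : (j < 2 * k)%N -> (0 < k)%N.
Proof. lia. Qed.

Lemma arithm j k : (j./2).*2 = j -> (j < 2 * k)%N -> (j./2 < k)%N.
Proof. lia. Qed.

Lemma arithj j : (j./2).*2 = j -> (j * 4 = 8 * j./2)%N.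
Proof. lia. Qed.

Lemma arith8 r s : (r < s)%N -> (8 * s.+1 = 8 * r.+1 + 8 * (s - r))%N.
Proof. lia. Qed.

Theorem mainTheorem10 (R : realType) (k j : nat) (w : R)
  (A B : 'M[R[i]]_k) (C : 'M[R[i]]_(k, 2)) (D : 'M[R[i]]_(2, k))
  (g : 'M[R[i]]_k) :
  (j < 2 * k)%N -> ~~ odd j ->
  - pi < w < pi ->
  nonsingular_monad A B C D ->
  g \in unitmx ->
  expi (j%:R * pi / k%:R) *: A = g *m A *m invmx g ->
  expi (pi / k%:R) *: B
    = g *m (B - col 0 C *m row 0 D *m invmx A) *m invmx g ->
  expi (pi / (2 * k%:R)) * expi (j%:R * pi / (4 * k%:R)) *: col 0 C
    = expi w *: (g *m col 1 C) ->
  expi (pi / (2 * k%:R)) * expi (3 * j%:R * pi / (4 * k%:R)) *: col 1 C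
    = expi (- w) *: (g *m A *m col 0 C) ->
  expi (pi / (2 * k%:R)) * expi (3 * j%:R * pi / (4 * k%:R)) *: row 0 D
    = expi (- w) *: (row 1 D *m invmx g) ->
  expi (pi / (2 * k%:R)) * expi (j%:R * pi / (4 * k%:R)) *: row 1 D
    = expi w *: (row 0 D *m invmx A *m invmx g) ->
  let G := expi (- (j%:R * pi / (2 * k%:R))) *: (g *m g *m A) in
  exists h : 'M[R[i]]_k, h \in unitmx /\
    h *m G *m invmx h
      = expi ((2 - j%:R) * pi / (2 * k%:R))
        *: diag_mx (\row_(r < k) expi (2 * pi * (r.+1)%:R / k%:R)).
Proof.
move=> hj hodd hw [Au hmon hrank] gu hA hB hC1 hC2 hD1 hD2 G.
have k0 : (0 < k)%N := @arithk j k hj.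
have kR : k%:R != 0 :> R by rewrite pnatr_eq0 -lt0n.
pose th := pi / (4 * k%:R) : R.
pose z := expi th. pose b := z ^+ j. pose u := expi w.
have angle (n : nat) (x : R) : x = n%:R * th -> expi x = z ^+ n.
  by move=> ->; rewrite expiMn.
have e1 : expi (j%:R * pi / k%:R) = b ^+ 4.
  rewrite (angle (j * 4)%N) ?exprM // /th natrM; field; by rewrite ?kR.
have e2 : expi (pi / k%:R) = z ^+ 4.
  rewrite (angle 4%N) // /th; field; by rewrite ?kR.
have e3 : expi (pi / (2 * k%:R)) = z ^+ 2.
  rewrite (angle 2%N) // /th; field; by rewrite ?kR.
have e4 : expi (j%:R * pi / (4 * k%:R)) = b.
  rewrite (angle j) // /th; field; by rewrite ?kR.
have e5 : expi (3 * j%:R * pi / (4 * k%:R)) = b ^+ 3.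
  rewrite (angle (j * 3)%N) ?exprM // /th natrM; field; by rewrite ?kR.
have e6 : expi (- (j%:R * pi / (2 * k%:R))) = (b ^+ 2)^-1.
  rewrite expiN (angle (j * 2)%N) ?exprM // /th natrM; field; by rewrite ?kR.
have e7 : expi ((2 - j%:R) * pi / (2 * k%:R)) = z ^+ 4 / b ^+ 2.
  have -> : (2 - j%:R) * pi / (2 * k%:R) = 4%:R * th + - ((j * 2)%:R * th).
    rewrite /th natrM; field; by rewrite ?kR.
  by rewrite expiD expiN !expiMn exprM.
have e8 (r : 'I_k) : expi (2 * pi * (r.+1)%:R / k%:R) = z ^+ (8 * r.+1).
  rewrite (angle (8 * r.+1)%N) // /th natrM; field; by rewrite ?kR.
have e9 : expi (- w) = u^-1 by rewrite expiN.
rewrite e1 in hA; rewrite e2 in hB; rewrite e3 e4 in hC1; rewrite e3 e5 e9 in hC2.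
rewrite e3 e5 e9 in hD1; rewrite e3 e4 in hD2.
rewrite /G e6 e7.
have -> : \row_(r < k) expi (2 * pi * (r.+1)%:R / k%:R) = \row_(r < k) z ^+ (8 * r.+1).
  by apply/rowP => r; rewrite !mxE e8.
have z0 : z != 0 by exact: expi_neq0.
have b0 : b != 0 by rewrite expf_neq0.
have u0 : u != 0 by exact: expi_neq0.
have ej : (j./2).*2 = j.
  by rewrite -{2}(odd_double_half j) (negbTE hodd) add0n.
have mk : (j./2 < k)%N := @arithm j k ej hj.
have hb4 : b ^+ 4 = z ^+ (8 * j./2) by rewrite /b -exprM (@arithj j ej).
have hzk : z ^+ (8 * k) = 1.
  rewrite -(angle (8 * k)%N (pi *+ 2)) ?expi2pi // /th natrM mulr2n; field.
  by rewrite ?kR.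
have hsurj x y (hx : x != 0) := (hrank x y hx).2.
have hinjr x y (hx : x != 0) := (hrank x y hx).1.
have hzinj r s : (r < k)%N -> (s < k)%N -> z ^+ (8 * r.+1) = z ^+ (8 * s.+1) -> r = s.
  have key r' s' : (r' < s')%N -> (s' < k)%N -> z ^+ (8 * r'.+1) != z ^+ (8 * s'.+1).
    move=> rs sk; rewrite (@arith8 _ _ rs) exprD -{1}[z ^+ (8 * r'.+1)]mulr1.
    rewrite (inj_eq (mulfI (expf_neq0 _ z0))) eq_sym.
    rewrite -(angle (8 * (s' - r'))%N ((s' - r')%:R / k%:R * (pi *+ 2))); last first.
      rewrite /th (natrM _ 8) mulr2n; field; by rewrite ?kR.
    have q0 : 0 < (s' - r')%:R / k%:R :> R.
      by rewrite divr_gt0 // ltr0n // subn_gt0.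
    have q1 : (s' - r')%:R / k%:R < 1 :> R.
      rewrite ltr_pdivrMr ?ltr0n // mul1r ltr_nat.
      exact: leq_ltn_trans (leq_subr _ _) sk.
    have p0 : 0 < pi *+ 2 :> R by rewrite pmulrn_rgt0 // pi_gt0.
    by apply: expi_neq1; apply/andP; split; nra.
  move=> hr hs e; case: (ltngtP r s) => [rs|sr|//].
    by move/eqP: e; rewrite (negPf (key _ _ rs hs)).
  by move/esym/eqP: e; rewrite (negPf (key _ _ sr hr)).
exact: (@core_main _ k A B g C D z b u z0 b0 u0 Au gu hmon hA hB hC1 hC2 hD1 hD2
  (j./2) k0 mk hb4 hzk hsurj hinjr hzinj).
Qed.
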